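(* Let $p\ge 7$ be a prime and $k=(p-1)/2$. Then $\mathsf{BO}(k,\mathbb{Z}/p\mathbb{Z})=k+1$ if the multiplicative order of $2$ modulo $p$ is odd, and $\mathsf{BO}(k,\mathbb{Z}/p\mathbb{Z})=k+2$ if the multiplicative order of $2$ modulo $p$ is even.
   Context: For a positive integer $k$, a set $\{g_1,\dots,g_k\}$ of $k$ distinct elements of a finite abelian group $G$ (written additively) is called $k$-barycentric if $\sum_{i=1}^k g_i = k\,g_j$ for some $1\le j\le k$. The $k$-th barycentric Olson constant $\mathsf{BO}(k,G)$ is the smallest integer $\ell$ such that every subset $A\subseteq G$ with $|A|\ge \ell$ contains a $k$-barycentric subset (so that always $\mathsf{BO}(k,G)\le |G|+1$). The multiplicative order of $2$ modulo $p$ is the least positive integer $t$ with $2^t\equiv 1 \pmod p$. *)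

(* Defs.v *)
From HB Require Import structures.
From mathcomp Require Import all_boot all_order all_algebra.
Set Implicit Arguments. Unset Strict Implicit. Unset Printing Implicit Defensive.
Import GRing.Theory.
Local Open Scope ring_scope.

Definition barycentric (G : finZmodType) (k : nat) (B : {set G}) : bool :=
  (#|B| == k)%N && [exists g in B, (\sum_(x in B) x) == g *+ k].

Definition BO_prop (G : finZmodType) (k l : nat) : bool :=
  [forall A : {set G}, (l <= #|A|)%N ==>
     [exists B : {set G}, (B \subset A) && barycentric k B]].

Lemma BO_prop_ex (G : finZmodType) (k : nat) : exists l, BO_prop G k l.
Proof.
exists (#|G|.+1); apply/forallP => A; apply/implyP => H.
by move: (max_card (mem A)); rewrite leqNgt H.
Qed.

Definition BO (G : finZmodType) (k : nat) : nat := ex_minn (BO_prop_ex G k).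

Definition mult_order2 (p t : nat) : Prop :=
  (0 < t)%N /\ (2 ^ t = 1 %[mod p])%N /\
  (forall s, (0 < s)%N -> (2 ^ s = 1 %[mod p])%N -> (t <= s)%N).

(* Main.v *)
Require Import Defs.
From HB Require Import structures.
From mathcomp Require Import all_boot all_order all_algebra.
From mathcomp Require Import zify ring.
Set Implicit Arguments. Unset Strict Implicit. Unset Printing Implicit Defensive.
Import GRing.Theory.
Local Open Scope ring_scope.

Section Main.
Variable p : nat.
Hypothesis hp : prime p.
Hypothesis h7 : (7 <= p)%N.
Local Notation G := 'Z_p.
Local Notation k := ((p - 1) %/ 2)%N.

Lemma p1 : (1 < p)%N. Proof. by apply: leq_trans h7. Qed.

Lemma cardG : #|{: G}| = p. Proof. by rewrite card_ord Zp_cast // p1. Qed.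

Lemma valG_lt (x : G) : (val x < p)%N.
Proof. by case: x => m /=; rewrite Zp_cast // p1. Qed.

Lemma kE : (k * 2).+1 = p.
Proof.
have := prime_oddPn hp; case: (boolP (odd p)) => Ho H.
  have := modn2 p; rewrite Ho /= => Hm. lia.
by have := H isT; move=> E; move: h7; rewrite E.
Qed.

Lemma natG_eq a b : ((a%:R : G) = b%:R) <-> (a = b %[mod p])%N.
Proof.
split => H.
  by have := congr1 val H; rewrite /= !val_Zp_nat // p1.
by apply: val_inj; rewrite /= !val_Zp_nat // p1.
Qed.

Lemma natr_eq0 n : ((n%:R : G) == 0) = (p %| n)%N.
Proof.
apply/eqP/idP => [H|H].
  by have := congr1 val H; rewrite /= val_Zp_nat ?p1 // => /eqP.
by apply: val_inj; rewrite /= val_Zp_nat ?p1 //; apply/eqP.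
Qed.

Lemma unitG (x : G) : x != 0 -> x \is a GRing.unit.
Proof.
move=> x0; rewrite -[x]natr_Zp unitZpE ?p1 // prime_coprime //.
apply/negP => /dvdn_leq H.
have xp : (0 < val x)%N.
  by rewrite lt0n; apply: contra x0 => /eqP H0; apply/eqP; apply: val_inj.
by have := H xp; rewrite leqNgt valG_lt.
Qed.

Lemma mulG_eq0 (x y : G) : (x * y == 0) = (x == 0) || (y == 0).
Proof.
case: (eqVneq x 0) => [->|x0]; first by rewrite mul0r eqxx.
by rewrite mulrI_eq0 //; apply/mulrI/unitG.
Qed.

Lemma natr_unit n : (0 < n < p)%N -> (n%:R : G) \is a GRing.unit.
Proof.
move=> /andP [n0 np]; apply: unitG; rewrite natr_eq0; apply/negP => /dvdn_leq H.
by have := H n0; rewrite leqNgt np.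
Qed.

Lemma u2 : (2 : G) \is a GRing.unit.
Proof. apply: natr_unit; apply/andP; split => //; lia. Qed.
Lemma u3 : (3 : G) \is a GRing.unit.
Proof. apply: natr_unit; apply/andP; split => //; lia. Qed.
Lemma u5 : (5 : G) \is a GRing.unit.
Proof. apply: natr_unit; apply/andP; split => //; lia. Qed.
Lemma u10 : (10 : G) \is a GRing.unit.
Proof. have -> : (10 : G) = 2 * 5 by ring. by rewrite unitrM u2 u5. Qed.

Lemma kR : (k%:R : G) * 2 = -1.
Proof.
apply/eqP; rewrite -addr_eq0; apply/eqP.
have : ((k * 2).+1%:R : G) = 0 by rewrite kE; apply/eqP; rewrite natr_eq0.
by rewrite mulrSr natrM.
Qed.

Lemma baryE (B : {set G}) : barycentric k B =
  (#|B| == k) && [exists g in B, (\sum_(x in B) x) * 2 + g == 0].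
Proof.
rewrite /barycentric; congr (_ && _); apply: eq_existsb => g; congr (_ && _).
set s := \sum_(x in B) x.
rewrite -(inj_eq (mulIr u2)) /= -[g *+ k]mulr_natr -mulrA kR mulrN1 addr_eq0.
done.
Qed.


Lemma sub_size n (A : {set G}) : (n <= #|A|)%N -> exists2 B : {set G}, B \subset A & #|B| = n.
Proof.
move=> H; have [m Hm] : exists m, #|A| = (n + m)%N by exists (#|A| - n)%N; lia.
elim: m A Hm {H} => [|m IH] A Hm; first by exists A => //; rewrite Hm addn0.
have: (0 < #|A|)%N by rewrite Hm; lia.
case/card_gt0P => x xA.
have [B BA cB] : exists2 B : {set G}, B \subset A :\ x & #|B| = n.
  by apply: IH; move: Hm; rewrite (cardsD1 x) xA; lia.
by exists B => //; apply: subset_trans BA (subsetDl _ _).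
Qed.

Lemma bary1 (B0 : {set G}) a g : #|B0| = k.+1 -> a \in B0 -> g \in B0 -> g != a ->
  (\sum_(x in B0) x - a) * 2 + g = 0 ->
  exists2 B : {set G}, B \subset B0 & barycentric k B.
Proof.
move=> cB aB gB ga H; exists (B0 :\ a); first exact: subsetDl.
rewrite baryE; apply/andP; split.
  by move: cB; rewrite (cardsD1 a) aB; lia.
apply/existsP; exists g; rewrite !inE ga gB /=.
rewrite (big_setD1 _ aB) /= in H.
apply/eqP; rewrite -[X in _ = X]H; congr (_ * _ + _). ring.
Qed.

Lemma bary2 (A0 : {set G}) a b g : #|A0| = k.+2 -> a \in A0 -> b \in A0 -> g \in A0 ->
  b != a -> g != a -> g != b ->
  (\sum_(x in A0) x - a - b) * 2 + g = 0 ->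
  exists2 B : {set G}, B \subset A0 & barycentric k B.
Proof.
move=> cA aA bA gA ba ga gb H; exists (A0 :\ a :\ b).
  by apply: subset_trans (subsetDl _ _) (subsetDl _ _).
have bA' : b \in A0 :\ a by rewrite !inE ba bA.
rewrite baryE; apply/andP; split.
  move: cA; rewrite (cardsD1 a) aA (cardsD1 b (A0 :\ a)) bA'. lia.
apply/existsP; exists g; rewrite !inE ga gb gA /=.
rewrite (big_setD1 _ aA) (big_setD1 _ bA') /= in H.
apply/eqP; rewrite -[X in _ = X]H; congr (_ * _ + _). ring.
Qed.

Lemma two_neq0 : (2 : G) != 0.
Proof. by apply/negP => /eqP H; move: u2; rewrite H unitr0. Qed.

Lemma sumG0 : \sum_(x : G) x = 0.
Proof.
set s := \sum_(x : G) x.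
have H : s = - s by rewrite /s {1}(reindex_inj (@oppr_inj _)) /= sumrN.
have H2 : (2 : G) * s = 0.
  have -> : (2 : G) * s = s + s by ring.
  by rewrite {1}H addNr.
apply/eqP; have := mulG_eq0 2 s; rewrite H2 eqxx (negbTE two_neq0) /=.
by move/esym.
Qed.


Lemma unit_neq0 (m : G) : m \is a GRing.unit -> m != 0.
Proof. by apply: contraTneq => ->; rewrite unitr0. Qed.

Definition epsP (I : {set G}) (m : G) :=
  forall x, x != 0 -> (m * x \in I) = ~~ (x \in I).

Lemma eps_gen (I : {set G}) (m : G) : m \is a GRing.unit ->
  (forall x, x \in I -> x != 0) -> epsP I m ->
  #|I| = k /\ ((1 + m) \is a GRing.unit -> \sum_(x in I) x = 0).
Proof.
move=> hm HI He; have m0 := unit_neq0 hm.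
split.
  set J := [set~ (0:G)] :\: I.
  have pre : (fun x => m * x) @^-1: J = I.
    have n0I : (0:G) \notin I by apply/negP => /HI; rewrite eqxx.
    apply/setP => x; rewrite !inE; case: (eqVneq x 0) => [->|x0].
      by rewrite mulr0 eqxx /= andbF (negbTE n0I).
    by rewrite (mulG_eq0 m x) (negbTE m0) (negbTE x0) /= He // negbK andbT.
  have cJ : #|J| = #|I| by rewrite -pre card_preimset //; exact: mulrI hm.
  have sub0 : I \subset [set~ (0:G)] by apply/subsetP => x /HI; rewrite !inE.
  have := cardsID I [set~ (0:G)]; rewrite (setIidPr sub0).
  rewrite cJ cardsC1 cardG /= => H; have := kE; lia.
move=> h1m.
have := sumG0; rewrite (bigID (fun x => x \in I)) /=.
rewrite [X in _ + X](reindex_inj (mulrI hm)) /=.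
rewrite [X in _ + X](bigID (fun x => x \in I)) /=.
rewrite [X in _ + (_ + X)]big1; last first.
  move=> x /andP [H1 H2]; case: (eqVneq x 0) => [->|x0]; first by rewrite mulr0.
  by move: H1; rewrite He // H2.
rewrite addr0.
rewrite [X in _ + X](eq_bigl (fun x => x \in I)); last first.
  move=> x /=; case: (boolP (x \in I)) => xi; rewrite ?andbF ?andbT //.
  by rewrite He ?xi // HI.
rewrite -mulr_sumr => H.
apply: (mulrI h1m); rewrite mulr0 -[X in _ = X]H; ring.
Qed.

Lemma eps_iter (I : {set G}) (m : G) : m \is a GRing.unit -> epsP I m ->
  forall j x, x != 0 -> (m ^+ j * x \in I) = odd j (+) (x \in I).
Proof.
move=> hm He; elim=> [|j IH] x x0; first by rewrite expr0 mul1r.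
have nz : m ^+ j * x != 0 by rewrite mulG_eq0 negb_or x0 andbT unit_neq0 // unitrX.
by rewrite exprS -mulrA He // IH //= addNb.
Qed.

Lemma half_eps (I : {set G}) (m : G) : m \is a GRing.unit ->
  (forall x, x \in I -> x != 0) -> (k <= #|I|)%N ->
  (forall x, x \in I -> m * x \notin I) -> epsP I m.
Proof.
move=> hm HI cI Hd; have m0 := unit_neq0 hm.
set J := [set~ (0:G)] :\: I.
set pre := (fun x => m * x) @^-1: J.
have sub : I \subset pre.
  apply/subsetP => x xI; rewrite !inE Hd // mulG_eq0 negb_or m0 HI //.
have cJ : #|pre| = #|J| by rewrite card_preimset //; exact: mulrI hm.
have sub0 : I \subset [set~ (0:G)] by apply/subsetP => x /HI; rewrite !inE.
have := cardsID I [set~ (0:G)]; rewrite (setIidPr sub0).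
rewrite cardsC1 cardG /= -/J => cs; have := kE => kE.
have le := subset_leq_card sub.
have eqc : #|I| = #|pre|.
  move: cs cJ le cI kE. clear. set a := #|I|. set b := #|J|. set c := #|pre|. move=> *. lia.
have eqI := (subset_cardP eqc sub).
move=> x x0; have := eqI x; rewrite !inE mulG_eq0 negb_or m0 x0 /= => ->.
by rewrite andbT negbK.
Qed.


Lemma pow2G n : ((2:G) ^+ n = 1) <-> (2 ^ n = 1 %[mod p])%N.
Proof.
have -> : (2:G) ^+ n = (2 ^ n)%:R by rewrite natrX.
rewrite -[X in _ = X](mulr1n (1:G)).
exact: natG_eq.
Qed.

Lemma inj_order (m : G) u : m \is a GRing.unit ->
  (forall s, (0 < s < u)%N -> m ^+ s != 1) ->
  forall a b, (a < u)%N -> (b < u)%N -> m ^+ a = m ^+ b -> a = b.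
Proof.
move=> hm hs.
suff H : forall a b, (a < b)%N -> (b < u)%N -> m ^+ a = m ^+ b -> False.
  move=> a b au bu e; case: (ltngtP a b) => lab.
  - by case: (H a b lab bu e).
  - by case: (H b a lab au (esym e)).
  - exact: lab.
move=> a b ab bu e.
have e2 : m ^+ a * m ^+ (b - a) = m ^+ a * 1.
  rewrite -exprD subnKC; last exact: ltnW.
  rewrite mulr1; exact: (esym e).
have e3 := mulrI (unitrX a hm) e2.
have H1 : (0 < b - a < u)%N by apply/andP; split; lia.
have := hs (b - a)%N H1; rewrite e3 eqxx; discriminate.
Qed.

Section Eps.
Variables (m : G) (u : nat).
Hypotheses (hu : (0 < u)%N) (hev : ~~ odd u) (hmu : m ^+ u = 1)
  (hinj : forall a b, (a < u)%N -> (b < u)%N -> m ^+ a = m ^+ b -> a = b).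

Lemma m_unit : m \is a GRing.unit.
Proof.
apply: unitG; apply/negP => /eqP m0; move: hmu; rewrite m0 expr0n.
by case: u hu => // u' _ /eqP; rewrite eq_sym oner_eq0.
Qed.

Lemma expr_mod a : m ^+ (a %% u) = m ^+ a.
Proof. by rewrite {2}(divn_eq a u) exprD mulnC exprM hmu expr1n mul1r. Qed.

Definition dd (x : G) : 'I_u :=
  fintype.arg_min (Ordinal hu) xpredT (fun j : 'I_u => val (x * m ^+ j)).

Definition Ieps := [set x : G | (x != 0) && odd (dd x)].

Lemma eps_dd : epsP Ieps m.
Proof.
have hm := m_unit.
move=> x x0; have mx0 : m * x != 0.
  by rewrite mulG_eq0 negb_or x0 andbT unit_neq0.
rewrite !inE mx0 x0 /= /dd.
case: arg_minnP => // j1 _ H1; case: arg_minnP => // j0 _ H0.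
have A : leq (val (m * x * m ^+ j1)) (val (x * m ^+ j0)).
  set o := Ordinal (ltn_pmod (j0 + u.-1) hu).
  have E : m * x * m ^+ o = x * m ^+ j0.
    rewrite /= expr_mod -mulrA mulrCA -exprS -addnS prednK; last exact: hu.
    by rewrite exprD hmu mulr1.
  by have := H1 o isT; rewrite E.
have B : leq (val (x * m ^+ j0)) (val (m * x * m ^+ j1)).
  set o := Ordinal (ltn_pmod j1.+1 hu).
  have E : x * m ^+ o = m * x * m ^+ j1.
    rewrite /= expr_mod exprS mulrCA; exact: mulrA.
  by have := H0 o isT; rewrite E.
have E : m * x * m ^+ j1 = x * m ^+ j0.
  by apply: val_inj; apply/eqP; rewrite eqn_leq A B.
have E2 : m ^+ (j1.+1 %% u) = m ^+ j0.
  apply: (mulrI (unitG x0)); rewrite -E expr_mod exprS; ring.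
have := hinj (ltn_pmod j1.+1 hu) (ltn_ord j0) E2 => E3.
have lj1 := ltn_ord j1.
case: (ltngtP j1.+1 u) => h.
- by rewrite -E3 modn_small //=; case: (odd j1).
- exfalso; lia.
- move: E3; rewrite h modnn => <- /=.
  have : odd (j1.+1) = odd u by rewrite h.
  by move: hev; case: (odd u) => //=; case: (odd j1).
Qed.

End Eps.


Lemma ne_of_diff (y z w c : G) : c \is a GRing.unit -> w != 0 -> y - z = c * w -> y != z.
Proof.
move=> hc w0 E; apply/negP => /eqP yz; move: E; rewrite yz subrr => /esym/eqP.
by rewrite mulG_eq0 (negbTE (unit_neq0 hc)) (negbTE w0).
Qed.

Lemma nob_of (A : {set G}) : ~~ [exists B : {set G}, (B \subset A) && barycentric k B] ->
  forall B : {set G}, B \subset A -> ~~ barycentric k B.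
Proof.
move=> Hno B BA; apply/negP => Bb; move/negP: Hno; apply; apply/existsP; exists B.
by rewrite BA Bb.
Qed.

Lemma U2 (A : {set G}) : (k.+2 <= #|A|)%N ->
  [exists B : {set G}, (B \subset A) && barycentric k B].
Proof.
move=> cA; case: (boolP [exists B : {set G}, (B \subset A) && barycentric k B]) => [//|Hno]; exfalso; have nob := nob_of Hno.
have [A0 A0A cA0] := sub_size cA.
set S := \sum_(x in A0) x.
have key2 : forall a b g, a \in A0 -> b \in A0 -> g \in A0 -> b != a -> g != a -> g != b ->
    (S - a - b) * 2 + g != 0.
  move=> a b g aA bA gA ba ga gb; apply/negP => /eqP H.
  have [B BA0 Bb] := bary2 cA0 aA bA gA ba ga gb H.
  by move: (nob B (subset_trans BA0 A0A)); rewrite Bb.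
have step1 : forall a, a \in A0 -> (S * 2 - a * 2 \in A0) /\ (S * 2 - a * 2 != a).
  move=> a aA; set f := fun b => a * 2 + b * 2 - S * 2.
  have finj : injective f.
    move=> b1 b2; rewrite /f => E; apply: (mulIr u2); apply: (addrI (a * 2)).
    exact: (addIr _ E).
  set X := A0 :\ a; set Y := f @^-1: A0; set R := X :&: Y.
  have cX : #|X| = k.+1 by move: cA0; rewrite (cardsD1 a) aA -/X; lia.
  have cY : #|Y| = k.+2 by rewrite card_preimset.
  have cR : (2 <= #|R|)%N.
    have := cardsUI X Y; have := max_card (mem (X :|: Y)); rewrite cardG -/R.
    have := kE; move: cX cY; set x1 := #|X|; set x2 := #|Y|; set x3 := #|R|.
    set x4 := #|X :|: Y|; move=> *; lia.
  set b2 := S * 2 - a * 2.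
  have sub : R :\ b2 \subset f @^-1: [set a].
    apply/subsetP => b; rewrite !inE => /andP [bb2 /andP [/andP [ba bA] fbA]].
    apply/negPn/negP => fba.
    have fbb : f b != b.
      apply/negP => /eqP E; move/negP: bb2; apply; apply/eqP.
      have : b - b2 = f b - b by rewrite /b2 /f; ring.
      by rewrite E subrr => /eqP; rewrite subr_eq0 => /eqP.
    have := key2 a b (f b) aA bA fbA ba fba fbb.
    move/negP; apply; apply/eqP; rewrite /f; ring.
  have c1 : #|f @^-1: [set a]| = 1 by rewrite card_preimset // cards1.
  have le1 := subset_leq_card sub; rewrite c1 in le1.
  have := cardsD1 b2 R; case: (boolP (b2 \in R)) => hb2; last first.
    move: cR le1; set y1 := #|R|; set y2 := #|R :\ b2|; move=> *; lia.
  move=> _; move: hb2; rewrite !inE => /andP [/andP [h1 h2] _]; split => //.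
have step2 : forall a, a \in A0 -> a * 10 - S * 6 \notin A0.
  move=> a aA; have [h1 h2] := step1 a aA.
  have [h3 _] := step1 _ h1.
  set b2 := S * 2 - a * 2 in h1 h2 h3.
  set b := S * 2 - b2 * 2 in h3.
  have d0 : b2 - a != 0 by rewrite subr_eq0.
  apply/negP => gA.
  have ne1 : b != a.
    apply: (ne_of_diff (c := -1) _ d0); first by rewrite unitrN unitr1.
    rewrite /b /b2; ring.
  have ne2 : a * 10 - S * 6 != a.
    apply: (ne_of_diff (c := -3) _ d0); first by rewrite unitrN u3.
    rewrite /b2; ring.
  have ne3 : a * 10 - S * 6 != b.
    apply: (ne_of_diff (c := -2) _ d0); first by rewrite unitrN u2.
    rewrite /b /b2; ring.
  have := key2 a b _ aA h3 gA ne1 ne2 ne3.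
  move/negP; apply; apply/eqP; rewrite /b /b2; ring.
set psi := fun x => x * 10 - S * 6.
have pinj : injective psi.
  move=> x y; rewrite /psi => E; apply: (mulIr u10); exact: (addIr _ E).
have sub : A0 \subset psi @^-1: ~: A0.
  by apply/subsetP => a aA; rewrite !inE; apply: step2.
have := subset_leq_card sub; rewrite card_preimset //.
have := cardsC A0; rewrite cardG; have := kE; move: cA0.
set z1 := #|A0|; set z2 := #|~: A0|; move=> *; lia.
Qed.

Lemma lowk (I : {set G}) : (forall x, x \in I -> x != 0) -> #|I| = k ->
  \sum_(x in I) x = 0 -> ~~ BO_prop 'Z_p k k.
Proof.
move=> HI cI Hs; apply/negP => /forallP /(_ I) /implyP.
rewrite cI leqnn => /(_ isT) /existsP [B /andP [BI]].
rewrite baryE => /andP [/eqP cB /existsP [g /andP [gB /eqP H]]].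
have eBI : #|B| = #|I| by rewrite cB cI.
have BeI : B = I by apply/setP; apply/(subset_cardP eBI).
move: H gB; rewrite BeI Hs mul0r add0r => -> /HI.
by rewrite eqxx.
Qed.

Lemma lowk1 (I : {set G}) : (forall x, x \in I -> x != 0) -> epsP I 2 -> #|I| = k ->
  \sum_(x in I) x = 0 -> ~~ BO_prop 'Z_p k k.+1.
Proof.
move=> HI He cI Hs.
have n0I : (0:G) \notin I by apply/negP => /HI; rewrite eqxx.
set A := 0 |: I.
have cA : #|A| = k.+1 by rewrite cardsU1 n0I cI.
apply/negP => /forallP /(_ A) /implyP; rewrite cA leqnn => /(_ isT) /existsP [B /andP [BA]].
rewrite baryE => /andP [/eqP cB /existsP [g /andP [gB /eqP H]]].
have : #|A :\: B| == 1%N by rewrite cardsD (setIidPr BA) cA cB subSnn.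
case/cards1P => a Ha.
have sA : \sum_(x in A) x = 0 by rewrite big_setU1 //= Hs addr0.
move: sA; rewrite (@big_setID _ _ _ _ A B) (setIidPr BA) Ha big_set1 => sB.
have aAB : a \in A :\: B by rewrite Ha set11.
move: aAB; rewrite inE => /andP [aB aA].
have ga : g = a * 2.
  apply/eqP; rewrite -subr_eq0; apply/eqP; rewrite -[RHS]H.
  have -> : \sum_(x in B) x = - a.
    by apply/eqP; rewrite -subr_eq0 opprK; apply/eqP; rewrite -[RHS]sB.
  ring.
have gA : g \in A := subsetP BA g gB.
case: (eqVneq a 0) => [a0|a0].
  by move: gB aB; rewrite ga a0 mul0r => ->.
have aI : a \in I by move: aA; rewrite !inE (negbTE a0).
have := He a a0; rewrite aI /= => h2a.
move: gA; rewrite !inE ga mulrC h2a orbF mulG_eq0 (negbTE two_neq0) /=.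
by rewrite (negbTE a0).
Qed.

Section Order.
Variable t : nat.
Hypothesis ht : mult_order2 p t.

Lemma two_t : (2:G) ^+ t = 1.
Proof. by case: ht => _ [H _]; apply/pow2G. Qed.

Lemma ord_dvd n : (2:G) ^+ n = 1 -> (t %| n)%N.
Proof.
move=> H; case: ht => t0 [_ tmin].
have E : (2:G) ^+ (n %% t) = 1.
  move: H; rewrite {1}(div.divn_eq n t) exprD mulnC exprM two_t expr1n mul1r; exact: id.
rewrite /dvdn; apply/eqP; move: E; case E2: (n %% t)%N => [|r] E; first by [].
have := tmin r.+1 isT (proj1 (pow2G _) E); have := ltn_pmod n t0; rewrite E2.
lia.
Qed.

Lemma U1 (todd : odd t) (A : {set G}) : (k.+1 <= #|A|)%N ->
  [exists B : {set G}, (B \subset A) && barycentric k B].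
Proof.
move=> cA; case: (boolP [exists B : {set G}, (B \subset A) && barycentric k B]) => [//|Hno]; exfalso; have nob := nob_of Hno.
have [B0 B0A cB0] := sub_size cA.
set S := \sum_(x in B0) x; set c := S * 2.
have key : forall a g, a \in B0 -> g \in B0 -> g != a -> (S - a) * 2 + g != 0.
  move=> a g aB gB ga; apply/negP => /eqP H.
  have [B BB0 Bb] := bary1 cB0 aB gB ga H.
  by move: (nob B (subset_trans BB0 B0A)); rewrite Bb.
set T := (fun x => x + c) @^-1: B0.
have cT : #|T| = k.+1 by rewrite card_preimset ?cB0 //; exact: addIr.
set I := T :\ 0.
have HI : forall x, x \in I -> x != 0 by move=> x; rewrite !inE => /andP [].
have cI : (k <= #|I|)%N.
  move: cT; rewrite (cardsD1 0) -/I; set y := #|I|; move=> *; lia.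
have Hd : forall x, x \in I -> 2 * x \notin I.
  move=> x; rewrite !inE => /andP [x0 xB]; apply/negP => /andP [_ x2B].
  have ne : 2 * x + c != x + c.
    apply: (ne_of_diff (c := 1) _ x0); [exact: unitr1 | ring].
  have := key (x + c) (2 * x + c) xB x2B ne.
  move/negP; apply; apply/eqP; rewrite /c; ring.
have He := half_eps u2 HI cI Hd.
have := eps_iter u2 He t (oner_neq0 _); rewrite two_t mul1r todd /=.
by case: (1 \in I).
Qed.

End Order.

End Main.

Lemma BO_mono (G : finZmodType) k l l' : (l <= l')%N -> BO_prop G k l -> BO_prop G k l'.
Proof.
move=> ll /forallP H; apply/forallP => A; apply/implyP => HA.
by have /implyP := H A; apply; apply: leq_trans HA.
Qed.

Lemma BO_eq (G : finZmodType) k m : BO_prop G k m.+1 -> ~~ BO_prop G k m -> BO G k = m.+1.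
Proof.
move=> H1 H2; rewrite /BO; case: ex_minnP => n Hn Hmin.
apply/eqP; rewrite eqn_leq Hmin //=; rewrite ltnNge; apply/negP => Hnm.
by move: H2; rewrite (BO_mono Hnm Hn).
Qed.

Theorem mainTheorem7 (p : nat) (hp : prime p) (h7 : (7 <= p)%N) (t : nat)
    (ht : mult_order2 p t) :
  BO ('Z_p : finZmodType) ((p - 1) %/ 2)
    = (if odd t then ((p - 1) %/ 2).+1 else ((p - 1) %/ 2).+2)%N.
Proof.
have t0 : (0 < t)%N by case: ht.
case: (boolP (odd t)) => todd.
- apply: BO_eq.
    by apply/forallP => A; apply/implyP; exact: (U1 hp h7 ht todd).
  have hu : (0 < t * 2)%N by lia.
  have hev : ~~ odd (t * 2) by rewrite oddM andbF.
  set m : 'Z_p := -2.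
  have hmu : m ^+ (t * 2) = 1.
    rewrite /m mulnC exprM sqrrN -exprM mulnC exprM (two_t h7 ht) expr1n.
    by [].
  have mu : m \is a GRing.unit by rewrite unitrN (u2 hp h7).
  have hord : forall s, (0 < s < t * 2)%N -> m ^+ s != 1.
    move=> s /andP [s0 s2]; apply/negP => /eqP Es.
    have E2 : (2 : 'Z_p) ^+ (s * 2) = 1.
      by rewrite mulnC exprM -sqrrN -exprM mulnC exprM Es expr1n.
    have := ord_dvd hp h7 ht E2; rewrite Gauss_dvdl ?coprimen2 // => ts.
    have st : s = t by move: ts => /dvdnP [[|[|q]] hq]; [lia | lia | nia].
    move: Es; rewrite st /m exprNn (two_t h7 ht) mulr1 -signr_odd todd expr1 => Hm.
    have : (2 : 'Z_p) = 1 - (-1) by ring.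
    by rewrite Hm subrr => /eqP; rewrite (negbTE (two_neq0 hp h7)).
  have hinj := inj_order hp h7 mu hord.
  have He := eps_dd hp h7 hu hev hmu hinj.
  have HI : forall x, x \in Ieps m hu -> x != 0 by move=> x; rewrite inE => /andP [].
  have [cI hs] := eps_gen hp h7 mu HI He.
  apply: (lowk hp h7 HI cI); apply: hs.
  have -> : 1 + m = -1 by rewrite /m; ring.
  by rewrite unitrN unitr1.
- apply: BO_eq.
    by apply/forallP => A; apply/implyP; exact: (U2 hp h7).
  have hmu := two_t h7 ht.
  have mu := u2 hp h7.
  have hord : forall s, (0 < s < t)%N -> (2 : 'Z_p) ^+ s != 1.
    move=> s /andP [s0 s2]; apply/negP => /eqP Es.
    case: ht => _ [_ tmin]; have := tmin s s0 (proj1 (pow2G h7 _) Es); lia.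
  have hinj := inj_order hp h7 mu hord.
  have He := eps_dd hp h7 t0 todd hmu hinj.
  have HI : forall x, x \in Ieps (2 : 'Z_p) t0 -> x != 0 by move=> x; rewrite inE => /andP [].
  have [cI hs] := eps_gen hp h7 mu HI He.
  apply: (lowk1 hp h7 HI He cI); apply: hs.
  have -> : (1 + 2 : 'Z_p) = 3 by ring.
  exact: (u3 hp h7).
Qed.
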